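(* Let $n\ge4$ and let $\mathcal D_n$ be a minimal DFA with state set $Q_n=\{0,\dots,n-1\}$, initial state $0$ and unique final state $n-1$, recognizing a two-sided ideal, with transition semigroup $T_n$. If every chain of states of $\mathcal D_n$ strictly ordered by $\prec$ has at most $3$ elements (i.e., a maximal-length such chain has length $3$), then $|T_n|\le n^{n-2}+(n-2)2^{n-2}+1$ and $T_n$ is a subsemigroup of $S_n$.
   Context: A two-sided ideal is a nonempty $L$ with $L=\Sigma^*L\Sigma^*$. For a state $q$, $K_q$ is the language accepted from $q$; $p\prec q$ means $K_p\subsetneq K_q$. The transition semigroup is the set of state transformations induced by nonempty words. Notation: $(p\to q)$ maps $p$ to $q$ and fixes other states; $(p_0,\dots,p_{k-1})$ is a cyclic permutation fixing other states. $S_n$ is the transition semigroup of the DFA with states $Q_n$, initial $0$, final $\{n-1\}$, alphabet $\{a,b,c,d,e,f\}$, with $a\colon(1,2,\dots,n-2)$, $b\colon(1,2)$, $c\colon(n-2\to1)$, $d\colon(n-2\to0)$, $e$ mapping each state of $\{0,\dots,n-2\}$ to $1$ and fixing $n-1$, and $f\colon(1\to n-1)$. *)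

(* Defs.v *)
From mathcomp Require Import all_boot.
From mathcomp Require Import boolp.
Set Implicit Arguments. Unset Strict Implicit. Unset Printing Implicit Defensive.

(* A DFA over the finite alphabet Sigma with state set Q_n = 'I_n is given by
   its transition function delta; the initial state is the state with value 0
   and the unique final state is the state with value n-1. *)

Definition dw (Sigma : finType) (n : nat) (delta : Sigma -> 'I_n -> 'I_n)
  (q : 'I_n) (w : seq Sigma) : 'I_n :=
  foldl (fun p a => delta a p) q w.

Definition Kq (Sigma : finType) (n : nat) (delta : Sigma -> 'I_n -> 'I_n)
  (q : 'I_n) (w : seq Sigma) : Prop :=
  val (dw delta q w) = n.-1.

Definition dfa_lang (Sigma : finType) (n : nat) (delta : Sigma -> 'I_n -> 'I_n)
  (w : seq Sigma) : Prop :=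
  exists q0 : 'I_n, val q0 = 0 /\ Kq delta q0 w.

Definition two_sided_ideal (Sigma : finType) (L : seq Sigma -> Prop) : Prop :=
  (exists w, L w) /\
  forall w, L w <-> exists u x v, w = u ++ x ++ v /\ L x.

Definition minimal_dfa (Sigma : finType) (n : nat) (delta : Sigma -> 'I_n -> 'I_n) : Prop :=
  (forall q : 'I_n, exists (q0 : 'I_n) (w : seq Sigma), val q0 = 0 /\ dw delta q0 w = q) /\
  (forall p q : 'I_n, (forall w, Kq delta p w <-> Kq delta q w) -> p = q).

Definition prec (Sigma : finType) (n : nat) (delta : Sigma -> 'I_n -> 'I_n)
  (p q : 'I_n) : Prop :=
  (forall w, Kq delta p w -> Kq delta q w) /\ (exists w, Kq delta q w /\ ~ Kq delta p w).

(* s is a chain strictly ordered by prec (consecutive elements related;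
   prec is transitive so this is a chain) *)
Fixpoint prec_chain (Sigma : finType) (n : nat) (delta : Sigma -> 'I_n -> 'I_n)
  (s : seq 'I_n) : Prop :=
  match s with
  | x :: ((y :: _) as t) => prec delta x y /\ prec_chain delta t
  | _ => True
  end.

Definition trans_of (Sigma : finType) (n : nat) (delta : Sigma -> 'I_n -> 'I_n)
  (w : seq Sigma) : {ffun 'I_n -> 'I_n} :=
  [ffun q => dw delta q w].

Definition trans_semigroup (Sigma : finType) (n : nat) (delta : Sigma -> 'I_n -> 'I_n)
  : {set {ffun 'I_n -> 'I_n}} :=
  [set t | `[< exists w : seq Sigma, w <> [::] /\ t = trans_of delta w >]].

(* The DFA defining S_n, alphabet {a,b,c,d,e,f} = 'I_6 (a=0,...,f=5),
   first on nat then restricted to 'I_n *)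
Definition Sn_nat (n : nat) (x : nat) (q : nat) : nat :=
  match x with
  | 0 =>
      if (1 <= q) && (q <= n - 2) then (if q == n - 2 then 1 else q.+1) else q
  | 1 =>
      if q == 1 then 2 else if q == 2 then 1 else q
  | 2 =>
      if q == n - 2 then 1 else q
  | 3 =>
      if q == n - 2 then 0 else q
  | 4 =>
      if q == n - 1 then q else 1
  | _ =>
      if q == 1 then n - 1 else q
  end.

Definition Sn_delta (n : nat) (x : 'I_6) (q : 'I_n) : 'I_n :=
  insubd q (Sn_nat n (val x) (val q)).

Definition S_n (n : nat) : {set {ffun 'I_n -> 'I_n}} :=
  trans_semigroup (@Sn_delta n).

(* Main.v *)
Require Import Defs.
From mathcomp Require Import all_boot.
From mathcomp Require Import boolp zify.
Set Implicit Arguments. Unset Strict Implicit. Unset Printing Implicit Defensive.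

Definition gen n (F : nat -> nat) : Prop :=
  exists w : seq 'I_6, forall q : 'I_n, val (dw (@Sn_delta n) q w) = F q.

Lemma gen_ext n F G : gen n F -> (forall q, q < n -> F q = G q) -> gen n G.
Proof. by move=> [w H] E; exists w => q; rewrite H E. Qed.

Lemma gen_comp n F G : gen n F -> gen n G -> gen n (fun q => G (F q)).
Proof.
move=> [w1 H1] [w2 H2]; exists (w1 ++ w2) => q.
by rewrite /dw foldl_cat -/(dw _ _ w1) -/(dw _ _ w2) H2 H1.
Qed.

Lemma gen_id n : gen n id.
Proof. by exists [::]. Qed.

Lemma Sn_nat_lt n (x q : nat) : 4 <= n -> q < n -> Sn_nat n x q < n.
Proof.
rewrite /Sn_nat => h1 h2; case: x => [|[|[|[|[|x]]]]]; repeat case: ifP; lia.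
Qed.

Lemma gen_letter n (x : 'I_6) : 4 <= n -> gen n (Sn_nat n x).
Proof.
move=> h; exists [:: x] => q /=.
rewrite /dw /= /Sn_delta val_insubd Sn_nat_lt //; exact: ltn_ord.
Qed.

Ltac letter n k := exact: (@gen_letter n (@Ordinal 6 k is_true_true)).

Definition Rot n k q :=
  if (1 <= q) && (q <= n - 2) then (if q + k <= n - 2 then q + k else q + k - (n - 2)) else q.

Lemma gen_rot n k : 4 <= n -> k <= n - 2 -> gen n (Rot n k).
Proof.
move=> h; elim: k => [|k IH] hk.
  apply: gen_ext (gen_id n) _ => q hq; rewrite /Rot; repeat case: ifP; lia.
have ga : gen n (Sn_nat n 0) by letter n 0.
apply: gen_ext (gen_comp (IH (ltnW hk)) ga) _ => q hq /=.
rewrite /Rot; repeat case: ifP; lia.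
Qed.

Definition sw (x y q : nat) : nat := if q == x then y else if q == y then x else q.

Lemma gen_adj n x : 4 <= n -> 1 <= x -> x < n - 2 -> gen n (sw x x.+1).
Proof.
move=> h h1 h2.
have g1 : gen n (Rot n (n - 2 - (x - 1))) by apply: gen_rot => //; lia.
have g2 : gen n (Rot n (x - 1)) by apply: gen_rot => //; lia.
have gb : gen n (Sn_nat n 1) by letter n 1.
apply: gen_ext (gen_comp (gen_comp g1 gb) g2) _.
move=> q hq /=; rewrite /Rot /sw; repeat case: ifP; lia.
Qed.

Lemma gen_sw_lt n x d : 4 <= n -> 1 <= x -> x + d.+1 <= n - 2 -> gen n (sw x (x + d.+1)).
Proof.
move=> h h1; elim: d => [|d IH] hd.
  by rewrite addn1; apply: gen_adj => //; lia.
have ga : gen n (sw (x + d.+1) (x + d.+1).+1) by apply: gen_adj => //; lia.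
have gi : gen n (sw x (x + d.+1)) by apply: IH; lia.
apply: gen_ext (gen_comp (gen_comp ga gi) ga) _.
move=> q hq /=; rewrite /sw; repeat case: ifP; lia.
Qed.

Lemma gen_sw n x y : 4 <= n -> 1 <= x <= n - 2 -> 1 <= y <= n - 2 -> gen n (sw x y).
Proof.
move=> h hx hy.
case: (ltngtP x y) => hxy.
- have := @gen_sw_lt n x (y - x).-1 h (ltac:(lia)) (ltac:(lia)).
  by have -> : x + (y - x).-1.+1 = y by lia.
- have := @gen_sw_lt n y (x - y).-1 h (ltac:(lia)) (ltac:(lia)).
  have -> : y + (x - y).-1.+1 = x by lia.
  move=> g; apply: gen_ext g _ => q _; rewrite /sw; repeat case: ifP; lia.
- subst; apply: gen_ext (gen_id n) _ => q _; rewrite /sw /=; repeat case: ifP; lia.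
Qed.

Definition pt (p r q : nat) : nat := if q == p then r else q.

Lemma gen_pt0 n p : 4 <= n -> 1 <= p <= n - 2 -> gen n (pt p 0).
Proof.
move=> h hp.
have gd : gen n (Sn_nat n 3) by letter n 3.
have gs : gen n (sw p (n - 2)) by apply: gen_sw => //; lia.
apply: gen_ext (gen_comp (gen_comp gs gd) gs) _.
move=> q hq /=; rewrite /sw /pt; repeat case: ifP; lia.
Qed.

Lemma gen_ptz n p : 4 <= n -> 1 <= p <= n - 2 -> gen n (pt p (n - 1)).
Proof.
move=> h hp.
have gf : gen n (Sn_nat n 5) by letter n 5.
have gs : gen n (sw p 1) by apply: gen_sw => //; lia.
apply: gen_ext (gen_comp (gen_comp gs gf) gs) _.
move=> q hq /=; rewrite /sw /pt; repeat case: ifP; lia.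
Qed.

Lemma gen_ptN n r : 4 <= n -> 1 <= r <= n - 2 -> gen n (pt (n - 2) r).
Proof.
move=> h hr.
case: (eqVneq r (n - 2)) => [->|hrN].
  by apply: gen_ext (gen_id n) _ => q _; rewrite /pt; case: ifP => // /eqP.
have gc : gen n (Sn_nat n 2) by letter n 2.
have gs : gen n (sw 1 r) by apply: gen_sw => //; lia.
apply: gen_ext (gen_comp (gen_comp gs gc) gs) _.
move=> q hq /=; rewrite /sw /pt; repeat case: ifP; lia.
Qed.

Lemma gen_ptm n p r : 4 <= n -> 1 <= p <= n - 2 -> 1 <= r <= n - 2 -> gen n (pt p r).
Proof.
move=> h hp hr.
case: (eqVneq p r) => [->|hpr].
  by apply: gen_ext (gen_id n) _ => q _; rewrite /pt; case: ifP => // /eqP.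
case: (eqVneq p (n - 2)) => [->|hpN]; first exact: gen_ptN.
have gc : gen n (pt (n - 2) (if r == n - 2 then p else r)) by apply: gen_ptN => //; case: eqP => _; lia.
have gs : gen n (sw p (n - 2)) by apply: gen_sw => //; lia.
apply: gen_ext (gen_comp (gen_comp gs gc) gs) _.
move=> q hq /=; rewrite /sw /pt; repeat case: ifP; lia.
Qed.

Lemma gen_pt n p r : 4 <= n -> 1 <= p <= n - 2 -> r < n -> gen n (pt p r).
Proof.
move=> h hp hr.
case: (posnP r) => [->|r0]; first exact: gen_pt0.
case: (eqVneq r (n - 1)) => [->|rz]; first exact: gen_ptz.
apply: gen_ptm => //; lia.
Qed.

Lemma count_le_in (T : eqType) (a b : pred T) s :
  {in s, forall y, a y -> b y} -> count a s <= count b s.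
Proof.
elim: s => [//|y s IH] hab /=; apply: leq_add.
  by case ay: (a y) => //; rewrite (hab y) // inE eqxx.
by apply: IH => z zs; apply: hab; rewrite inE zs orbT.
Qed.

Lemma count_lt (T : eqType) (a b : pred T) s x :
  {in s, forall y, a y -> b y} -> x \in s -> b x -> ~~ a x -> count a s < count b s.
Proof.
elim: s => [//|y s IH] hab /=; rewrite inE => /orP [/eqP ->|xs] bx ax.
  rewrite (negbTE ax) bx add0n add1n ltnS.
  by apply: count_le_in => z zs; apply: hab; rewrite inE zs orbT.
have h1 : a y <= b y by case ay: (a y) => //; rewrite (hab y) // inE eqxx.
have h2 := IH (fun z zs => hab z (ltac:(by rewrite inE zs orbT))) xs bx ax.
rewrite -addnS; apply: leq_add => //.
Qed.

Definition Dm n (F : nat -> nat) := count (fun q => F q != q) (iota 1 (n - 2)).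

Lemma sw_inv x y q : sw x y (sw x y q) = q.
Proof. rewrite /sw; repeat case: eqP; congruence. Qed.

Lemma gen_P0 n F : 4 <= n -> F 0 = 0 -> F (n - 1) = n - 1 ->
  (forall q, q < n -> F q < n) -> gen n F.
Proof.
move=> h; move: {2}(Dm n F) (leqnn (Dm n F)) => k.
elim: k F => [|k IH] F hD F0 Fz Fr.
  apply: gen_ext (gen_id n) _ => q hq /=.
  case: (posnP q) => [->//|q0]; case: (eqVneq q (n - 1)) => [->//|qz].
  have hq' : q \in iota 1 (n - 2) by rewrite mem_iota; lia.
  move: hD; rewrite leqn0 /Dm => /eqP h0.
  have : ~~ has (fun q => F q != q) (iota 1 (n - 2)) by rewrite has_count h0.
  by move/hasPn => /(_ q hq'); rewrite negbK => /eqP.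
case hh: (has (fun q => F q != q) (iota 1 (n - 2))); last first.
  apply: IH => //; rewrite /Dm.
  by move/negbT: hh; rewrite has_count lt0n negbK => /eqP ->.
move/hasP: hh => [p]; rewrite mem_iota => hp Fp.
set r := F p.
have rn : r < n by apply: Fr; lia.
have Fr' : forall q, (1 <= q <= n - 2) -> F q != q -> q != p -> (fun q => F q != q) q by [].
case hc: [|| r == 0, r == n - 1 | F r == r].
  pose F' := fun q => if q == p then q else F q.
  have gF' : gen n F'.
    apply: IH.
    - rewrite -ltnS; apply: leq_trans _ hD; rewrite /Dm.
      apply: (@count_lt _ _ _ _ p).
      + move=> y _; rewrite /F'; case: (eqVneq y p) => [->|yp]; [by rewrite !eqxx | exact: id].
      + by rewrite mem_iota; lia.
      + exact: Fp.
      + by rewrite /F' eqxx negbK.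
    - by rewrite /F'; case: eqP => //; lia.
    - by rewrite /F'; case: eqP => //; lia.
    - by move=> q hq; rewrite /F'; case: eqP => // _; apply: Fr.
  have gp : gen n (pt p r) by apply: gen_pt => //; lia.
  apply: gen_ext (gen_comp gp gF') _ => q hq /=.
  rewrite /pt /F'; case: (eqVneq q p) => [->|qp]; last by rewrite (negbTE qp).
  have rp : r != p by [].
  rewrite (negbTE rp); move: hc => /or3P [/eqP|/eqP|/eqP] //.
  - by move=> e; transitivity 0; [rewrite e | rewrite -e].
  - by move=> e; transitivity (n - 1); [rewrite e | rewrite -e].
move/negbT: hc; rewrite !negb_or => /and3P [r0 rz Frr].
pose F' := fun q => sw p r (F q).
have gF' : gen n F'.
  apply: IH.
  - rewrite -ltnS; apply: leq_trans _ hD; rewrite /Dm.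
    apply: (@count_lt _ _ _ _ p).
    + move=> y; rewrite mem_iota => hy; apply: contraNN => /eqP Fy.
      rewrite /F' Fy /sw; case: (eqVneq y p) => [yp|yp].
        by move: Fp; rewrite -yp Fy eqxx.
      case: (eqVneq y r) => [yr|yr]; last by rewrite eqxx.
      by move: Frr; rewrite -yr Fy eqxx.
    + by rewrite mem_iota; lia.
    + exact: Fp.
    + rewrite /F' /sw -/r eqxx; case: (eqVneq r p) => [e|_]; [by rewrite e eqxx | by rewrite eqxx].
  - by rewrite /F' F0 /sw; repeat case: eqP; lia.
  - by rewrite /F' Fz /sw; repeat case: eqP; lia.
  - move=> q hq; rewrite /F' /sw; have := Fr q hq; repeat case: eqP; lia.
have gs : gen n (sw p r) by apply: gen_sw => //; lia.
by apply: gen_ext (gen_comp gF' gs) _ => q hq /=; rewrite /F' sw_inv.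
Qed.

Lemma gen_P n F : 4 <= n -> F (n - 1) = n - 1 -> (forall q, q < n -> F q < n) ->
  (F 0 = 0 \/ (forall q, q < n -> F q = n - 1) \/
   (1 <= F 0 <= n - 2 /\ forall q, q < n -> F q = F 0 \/ F q = n - 1)) -> gen n F.
Proof.
move=> h Fz Fr [F0|[Fall|[hm Fm]]].
- exact: gen_P0.
- have ge : gen n (Sn_nat n 4) by letter n 4.
  have gf : gen n (Sn_nat n 5) by letter n 5.
  apply: gen_ext (gen_comp ge gf) _ => q hq /=; rewrite Fall //.
  repeat case: ifP; lia.
- set m := F 0 in hm Fm.
  pose G := fun q => if q == 0 then 0 else if F q == n - 1 then n - 1 else q.
  have gG : gen n G.
    apply: gen_P0 => //.
    + by rewrite /G Fz; repeat case: ifP; lia.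
    + move=> q hq; rewrite /G; have := Fr q hq; repeat case: ifP; lia.
  have ge : gen n (Sn_nat n 4) by letter n 4.
  have gs : gen n (sw 1 m) by apply: gen_sw => //; lia.
  apply: gen_ext (gen_comp (gen_comp gG ge) gs) _ => q hq /=.
  rewrite /G; case: (posnP q) => [->|q0] /=.
    rewrite /sw; repeat case: ifP; lia.
  case: (eqVneq q (n - 1)) => [->|qz].
    rewrite Fz /sw; repeat case: ifP; lia.
  have := Fm q hq; rewrite /sw; repeat case: ifP; lia.
Qed.
Lemma dw_cat (Sigma : finType) n (delta : Sigma -> 'I_n -> 'I_n) q u v :
  dw delta q (u ++ v) = dw delta (dw delta q u) v.
Proof. by rewrite /dw foldl_cat. Qed.

Lemma gen_ne n F : 4 <= n -> gen n F ->
  exists w, w <> [::] /\ forall q : 'I_n, val (dw (@Sn_delta n) q w) = F q.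
Proof.
move=> h [w H]; exists (w ++ [:: Ordinal (isT : 1 < 6); Ordinal (isT : 1 < 6)]).
split; first by case: w {H}.
move=> q; rewrite dw_cat -H; set x := dw _ q w.
rewrite /dw /= /Sn_delta !val_insubd !Sn_nat_lt //; last exact: ltn_ord.
  by rewrite /Sn_nat /=; case: (val x) => [|[|[|k]]].
all: exact: ltn_ord.
Qed.

Definition Pb n (q0 z : 'I_n) (t : {ffun 'I_n -> 'I_n}) : bool :=
  (t z == z) && [|| t q0 == q0, [forall q, t q == z] |
    [&& t q0 != q0, t q0 != z & [forall q, (t q == t q0) || (t q == z)]]].

Lemma Pb_Sn n (q0 z : 'I_n) (t : {ffun 'I_n -> 'I_n}) (h : 4 <= n) :
  val q0 = 0 -> val z = n.-1 -> Pb q0 z t -> t \in S_n n.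
Proof.
move=> vq0; rewrite -subn1 => vz /andP [/eqP tz hP].
pose F := fun q => val (t (insubd q0 q)).
have Fq : forall q : 'I_n, F q = val (t q) by move=> q; rewrite /F valKd.
have F0 : F 0 = val (t q0) by rewrite /F; congr (val (t _)); apply: val_inj; rewrite val_insubd ?vq0 ?vz /=; case: ifP => //; lia.
have Fz : F (n - 1) = val (t z).
  by rewrite /F; congr (val (t _)); apply: val_inj; rewrite val_insubd ?vq0 ?vz /=; case: ifP => //; lia.
have gF : gen n F.
  apply: gen_P => //.
  - by rewrite Fz tz vz; lia.
  - by move=> q _; exact: ltn_ord.
  case/or3P: hP => [/eqP e|/forallP all|/and3P [e1 e2 /forallP all]].
  + by left; rewrite F0 e vq0.
  + right; left => q hq; rewrite /F (eqP (all _)) vz; lia.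
  + right; right; split.
      rewrite F0; move: e1 e2; rewrite -!(inj_eq val_inj) vq0 vz.
      case: (t q0) => m hm /=; lia.
    move=> q hq; rewrite F0 /F; case/orP: (all (insubd q0 q)) => /eqP ->; [left|right] => //; rewrite vz; lia.
have [w [wne Hw]] := gen_ne h gF.
rewrite inE; apply/asboolP; exists w; split => //.
by apply/ffunP => q; apply: val_inj; rewrite ffunE Hw Fq.
Qed.

Lemma T_Pb (Sigma : finType) n (delta : Sigma -> 'I_n -> 'I_n) (q0 z : 'I_n) t1 :
  4 <= n -> minimal_dfa delta -> two_sided_ideal (dfa_lang delta) ->
  (forall s : seq 'I_n, prec_chain delta s -> size s <= 3) ->
  val q0 = 0 -> val z = n.-1 -> t1 \in trans_semigroup delta -> Pb q0 z t1.
Proof.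
move=> h [reach dist] [_ ideal] chain vq0 vz.
rewrite inE => /asboolP [w [_ ->]].
have Lq0 : forall v, dfa_lang delta v <-> Kq delta q0 v.
  move=> v; split; last by exists q0.
  by move=> [q1 [v1 K]]; have -> : q0 = q1 by apply: val_inj; rewrite vq0 v1.
have Lext : forall u v x, Kq delta q0 x -> Kq delta q0 (u ++ x ++ v).
  by move=> u v x /Lq0 Lx; apply/Lq0/ideal; exists u, x, v.
have K0sub : forall q v, Kq delta q0 v -> Kq delta q v.
  move=> q v K; have [q1 [u [v1 e]]] := reach q.
  have e1 : q1 = q0 by apply: val_inj; rewrite vq0 v1.
  rewrite -e /Kq -dw_cat e1.
  by move: (Lext u [::] v K); rewrite cats0.
have Kz : forall v, Kq delta z v.
  move=> v; have [q1 [u [v1 e]]] := reach z.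
  have e1 : q1 = q0 by apply: val_inj; rewrite vq0 v1.
  rewrite e1 in e; have Ku : Kq delta q0 u by rewrite /Kq e vz.
  by move: (Lext [::] v u Ku); rewrite /Kq /= dw_cat e.
have strict : forall a b, (forall v, Kq delta a v -> Kq delta b v) -> a <> b ->
    exists v, Kq delta b v /\ ~ Kq delta a v.
  move=> a b sab nab.
  case: (boolp.pselect (exists v, Kq delta b v /\ ~ Kq delta a v)) => // hn.
  exfalso; apply: nab; apply: dist => v; split; first exact: sab.
  move=> Kb; case: (boolp.pselect (Kq delta a v)) => // Ka.
  by exfalso; apply: hn; exists v.
have q0z : q0 <> z by move=> e; move: vz; rewrite -e vq0; lia.
have mid : forall p q, p <> q0 -> p <> z -> q <> q0 -> q <> z ->
    (forall v, Kq delta p v -> Kq delta q v) -> p = q.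
  move=> p q p0 pz qq0 qz spq.
  case: (boolp.pselect (p = q)) => // npq; exfalso.
  suff Hc : prec_chain delta [:: q0; p; q; z] by move: (chain _ Hc).
  split.
    split; first by move=> v; apply: K0sub.
    by apply: strict; [move=> v; apply: K0sub | move=> e; apply: p0].
  split; first by split => //; apply: strict.
  split => //; split; first by move=> v _; apply: Kz.
  by apply: strict => // v _; apply: Kz.
set t := trans_of delta w.
have KT : forall q v, Kq delta (t q) v <-> Kq delta q (w ++ v).
  by move=> q v; rewrite /t ffunE /Kq dw_cat.
have tz : t z = z.
  by apply: dist => v; split => _; [apply: Kz | apply/KT; apply: Kz].
have mono : forall q v, Kq delta (t q0) v -> Kq delta (t q) v.
  by move=> q v H; apply/KT; apply: K0sub; apply/KT.
rewrite /Pb tz eqxx /=.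
case: (eqVneq (t q0) q0) => [->|n0]; first by [].
case: (eqVneq (t q0) z) => [ez|nz].
  rewrite /=; apply/orP; left; apply/forallP => q; apply/eqP; apply: dist => v.
  by split => _; [apply: Kz | apply: mono; rewrite ez; apply: Kz].
rewrite /=; apply/orP; right; apply/forallP => q.
case: (eqVneq (t q) z) => [->|tqz]; first by rewrite orbT.
rewrite orbF; apply/eqP; symmetry; apply: mid => //; try exact/eqP.
move=> e; move/eqP: n0; apply; apply: dist => v; split; last exact: K0sub.
by move=> /(mono q); rewrite e.
by move=> v; apply: mono.
Qed.

Lemma Pb_mid n (q0 z : 'I_n) t : Pb q0 z t -> t q0 != q0 -> t q0 != z ->
  forall q, (t q == t q0) || (t q == z).
Proof.
case/andP => _ /or3P [/eqP -> /eqP //|/forallP a _ /eqP []|/and3P [_ _ /forallP a]] //.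
exact/eqP.
Qed.

Lemma Pb_z n (q0 z : 'I_n) t : Pb q0 z t -> q0 != z -> t q0 = z -> forall q, t q = z.
Proof.
move=> + qz e; rewrite /Pb e eqxx (eq_sym z q0) (negbTE qz) /= ?andbF ?orbF => /andP [_ /forallP a] q.
exact/eqP.
Qed.

Lemma card_Pb n (q0 z : 'I_n) : 4 <= n -> val q0 = 0 -> val z = n.-1 ->
  #|[set t | Pb q0 z t]| <= n ^ (n - 2) + (n - 2) * 2 ^ (n - 2) + 1.
Proof.
move=> h vq0; rewrite -subn1 => vz.
have i0h : 0 < n - 2 by lia.
pose i0 : 'I_(n - 2) := Ordinal i0h.
pose mid (i : 'I_(n - 2)) : 'I_n := insubd q0 i.+1.
pose idx (m : 'I_n) : 'I_(n - 2) := insubd i0 (val m).-1.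
have midK : forall q : 'I_n, val q != 0 -> val q != n - 1 -> mid (idx q) = q.
  move=> [q hq] /= /eqP a /eqP b; apply: val_inj; rewrite /mid /idx /=.
  rewrite !val_insubd /=; case: q hq a b => [//|q] hq a b /=.
  have c : q < n - 2 by lia.
  rewrite c; have d : q.+1 < n by lia.
  by rewrite d.
have q0z : q0 != z by rewrite -(inj_eq val_inj) vq0 vz; apply/eqP; lia.
pose C := (({ffun 'I_(n - 2) -> 'I_n} + ('I_(n - 2) * {ffun 'I_(n - 2) -> bool})) + unit)%type.
pose enc (t : {ffun 'I_n -> 'I_n}) : C :=
  if t q0 == q0 then inl (inl [ffun i => t (mid i)])
  else if t q0 != z then inl (inr (idx (t q0), [ffun i => t (mid i) == z]))
  else inr tt.
apply: leq_trans (@leq_card_in _ _ enc _ _) _; last first.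
  by rewrite /C card_sum card_sum card_prod !card_ffun !card_ord card_bool card_unit.
move=> t1 t2; rewrite !inE => P1 P2.
have tz1 : t1 z = z by case/andP: P1 => /eqP.
have tz2 : t2 z = z by case/andP: P2 => /eqP.
have midq : forall q : 'I_n, q != q0 -> q != z -> mid (idx q) = q.
  move=> q a b; apply: midK; [move: a | move: b]; by rewrite -(inj_eq val_inj) ?vq0 ?vz.
rewrite /enc; case: (eqVneq (t1 q0) q0) => a1; case: (eqVneq (t2 q0) q0) => a2 //;
  try by case: (t1 q0 != z); case: (t2 q0 != z).
- case => /ffunP E; apply/ffunP => q.
  case: (eqVneq q q0) => [->|qq0]; first by rewrite a1 a2.
  case: (eqVneq q z) => [->|qz]; first by rewrite tz1 tz2.
  by have := E (idx q); rewrite !ffunE midq.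
- case: (eqVneq (t1 q0) z) => b1; case: (eqVneq (t2 q0) z) => b2 //=.
  + move=> _; apply/ffunP => q.
    by rewrite (Pb_z P1 q0z b1) (Pb_z P2 q0z b2).
  + case=> ei /ffunP ef.
    have e0 : t1 q0 = t2 q0 by rewrite -(midq (t1 q0)) // ei midq.
    apply/ffunP => q.
    case: (eqVneq q q0) => [->//|qq0].
    case: (eqVneq q z) => [->|qz]; first by rewrite tz1 tz2.
    have := ef (idx q); rewrite !ffunE midq //.
    have := Pb_mid P1 a1 b1 q; have := Pb_mid P2 a2 b2 q.
    case: (eqVneq (t1 q) z) => [->|c1]; case: (eqVneq (t2 q) z) => [->|c2] //=.
    by rewrite !orbF => /eqP -> /eqP ->.
Qed.

Theorem lemma7 (n : nat) (Sigma : finType) (delta : Sigma -> 'I_n -> 'I_n) :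
  4 <= n ->
  minimal_dfa delta ->
  two_sided_ideal (dfa_lang delta) ->
  (forall s : seq 'I_n, prec_chain delta s -> size s <= 3) ->
  #|trans_semigroup delta| <= n ^ (n - 2) + (n - 2) * 2 ^ (n - 2) + 1
  /\ trans_semigroup delta \subset S_n n.
Proof.
move=> h min ideal chain.
have h0 : 0 < n by lia.
have h1 : n.-1 < n by lia.
pose q0 : 'I_n := Ordinal h0.
pose z : 'I_n := Ordinal h1.
have hsub : trans_semigroup delta \subset [set t | Pb q0 z t].
  by apply/subsetP => t tT; rewrite inE; exact: (T_Pb h min ideal chain (erefl : val q0 = 0) (erefl : val z = n.-1) tT).
split.
  exact: leq_trans (subset_leq_card hsub) (@card_Pb n q0 z h erefl erefl).
apply/subsetP => t tT; apply: (@Pb_Sn n q0 z) => //.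
exact: (T_Pb h min ideal chain (erefl : val q0 = 0) (erefl : val z = n.-1) tT).
Qed.
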